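(* Assume $(g,\mathfrak{D})$ satisfy B1–B3 with constant $\kappa>0$. Then for every $X\in\mathbb{R}^{m\times n}$ and all $D'\neq D\in\mathfrak{D}$, $$\frac{|F_X(D')-F_X(D)|}{\|D'-D\|_{1\to2}}\le L_X(\bar g)\Big(1+\frac{1}{\sqrt\kappa}\|D'-D\|_{1\to2}\Big).$$
   Context: $\mathfrak{D}\subset\mathbb{R}^{m\times d}$. B1: $g=\chi_{\mathcal K}$ is the indicator of a set $\mathcal K\subset\mathbb{R}^d$ ($0$ on $\mathcal K$, $+\infty$ outside); B2: $\kappa\|\alpha\|_1^2\le\|D\alpha\|_2^2$ for all $\alpha\in\mathcal K$, $D\in\mathfrak{D}$; B3: $0\in\mathcal K$. $\mathcal{L}_x(D,\alpha)=\tfrac12\|x-D\alpha\|_2^2+g(\alpha)$, $f_x(D)=\inf_\alpha\mathcal{L}_x(D,\alpha)$, $F_X(D)=\frac1n\sum_i f_{x_i}(D)$. $\|\Delta\|_{1\to2}=\max_j\|\delta_j\|_2$. $\bar g(t)=2\sqrt{2t/\kappa}$ and $L_X(\bar g)=\frac1n\sum_i\|x_i\|_2\bar g(\|x_i\|_2^2/2)=\frac{2}{n\sqrt\kappa}\|X\|_F^2$. *)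

(* Defs.v *)
From Stdlib Require Import Reals ClassicalEpsilon.
From mathcomp Require Import ssreflect ssrfun ssrbool eqtype ssrnat seq fintype.

Set Implicit Arguments.
Unset Strict Implicit.
Local Open Scope R_scope.

Definition osum (k : nat) (f : 'I_k -> R) : R :=
  foldr (fun j acc => f j + acc) 0 (enum 'I_k).

(* vectors in R^k are functions 'I_k -> R ; m x d matrices are 'I_m -> 'I_d -> R *)
Definition norm2 (k : nat) (v : 'I_k -> R) : R := sqrt (osum (fun i => pow (v i) 2)).
Definition norm1 (k : nat) (v : 'I_k -> R) : R := osum (fun i => Rabs (v i)).

Definition matvec (m d : nat) (D : 'I_m -> 'I_d -> R) (a : 'I_d -> R) : 'I_m -> R :=
  fun i => osum (fun j => D i j * a j).

Definition matsub (m d : nat) (A B : 'I_m -> 'I_d -> R) : 'I_m -> 'I_d -> R :=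
  fun i j => A i j - B i j.

(* ||Delta||_{1->2} = max_j ||delta_j||_2 (columns); max over an empty set taken as 0 *)
Definition norm12 (m d : nat) (A : 'I_m -> 'I_d -> R) : R :=
  foldr (fun j acc => Rmax (norm2 (fun i => A i j)) acc) 0 (enum 'I_d).

Definition is_glb (S : R -> Prop) (v : R) : Prop :=
  (forall y, S y -> v <= y) /\ (forall w, (forall y, S y -> w <= y) -> w <= v).

Definition Rinf (S : R -> Prop) : R := epsilon (inhabits 0) (is_glb S).

(* f_x(D) = inf_alpha 1/2 ||x - D alpha||^2 + chi_K(alpha)
          = inf over alpha in K of 1/2 ||x - D alpha||^2 *)
Definition fx (m d : nat) (K : ('I_d -> R) -> Prop) (x : 'I_m -> R)
  (D : 'I_m -> 'I_d -> R) : R :=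
  Rinf (fun v => exists a, K a /\ v = / 2 * pow (norm2 (fun i => x i - matvec D a i)) 2).

Definition col (m n : nat) (X : 'I_m -> 'I_n -> R) (i : 'I_n) : 'I_m -> R :=
  fun r => X r i.

Definition FX (m d n : nat) (K : ('I_d -> R) -> Prop) (X : 'I_m -> 'I_n -> R)
  (D : 'I_m -> 'I_d -> R) : R :=
  / INR n * osum (fun i => fx K (col X i) D).

Definition gbar (kappa t : R) : R := 2 * sqrt (2 * t / kappa).

Definition LX (m n : nat) (kappa : R) (X : 'I_m -> 'I_n -> R) : R :=
  / INR n * osum (fun i => norm2 (col X i) * gbar kappa (pow (norm2 (col X i)) 2 / 2)).

(* Main.v *)
Require Import Defs.
From Stdlib Require Import Reals.
From mathcomp Require Import ssreflect ssrfun ssrbool eqtype ssrnat seq fintype.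
From Stdlib Require Import Reals Lra Psatz Classical ClassicalEpsilon.
From mathcomp Require Import ssreflect ssrfun ssrbool eqtype ssrnat seq fintype.
Local Open Scope R_scope.

Definition lsum {T : Type} (s : seq T) (f : T -> R) : R :=
  foldr (fun j acc => f j + acc) 0 s.

Lemma osumE k f : osum f = lsum (enum 'I_k) f.
Proof. reflexivity. Qed.

Section L.
Context {T : Type}.
Lemma lsum_ext (s : seq T) f g : (forall x, f x = g x) -> lsum s f = lsum s g.
Proof. move=> H; rewrite /lsum; elim: s => [|x s IH] //=; rewrite IH H; reflexivity. Qed.
Lemma lsum_plus (s : seq T) f g : lsum s (fun x => f x + g x) = lsum s f + lsum s g.
Proof. rewrite /lsum; elim: s => [|x s IH] /=; [lra|rewrite IH; ring]. Qed.
Lemma lsum_minus (s : seq T) f g : lsum s (fun x => f x - g x) = lsum s f - lsum s g.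
Proof. rewrite /lsum; elim: s => [|x s IH] /=; [lra|rewrite IH; ring]. Qed.
Lemma lsum_scal (s : seq T) c f : lsum s (fun x => c * f x) = c * lsum s f.
Proof. rewrite /lsum; elim: s => [|x s IH] /=; [ring|rewrite IH; ring]. Qed.
Lemma lsum_le (s : seq T) f g : (forall x, f x <= g x) -> lsum s f <= lsum s g.
Proof. move=> H; rewrite /lsum; elim: s => [|x s IH] /=; [lra|specialize (H x); lra]. Qed.
Lemma lsum_le_in (s : seq T) f g : (forall x, List.In x s -> f x <= g x) -> lsum s f <= lsum s g.
Proof. rewrite /lsum; elim: s => [|x s IH] H /=; [lra|].
  have h1 := H x (or_introl erefl). have h2 := IH (fun y hy => H y (or_intror hy)). lra. Qed.
Lemma lsum_nonneg (s : seq T) f : (forall x, 0 <= f x) -> 0 <= lsum s f.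
Proof. move=> H; rewrite /lsum; elim: s => [|x s IH] /=; [lra|specialize (H x); lra]. Qed.
Lemma lsum_abs (s : seq T) f : Rabs (lsum s f) <= lsum s (fun x => Rabs (f x)).
Proof. rewrite /lsum; elim: s => [|x s IH] /=; first by rewrite Rabs_R0; lra.
  have := Rabs_triang (f x) (foldr (fun j acc => f j + acc) 0 s). lra. Qed.
Lemma lsum_zero (s : seq T) : lsum s (fun _ => 0) = 0.
Proof. rewrite /lsum; elim: s => [|x s IH] /=; [lra|rewrite IH; ring]. Qed.

Lemma aux_cs (S P Q a b : R) : 0 <= P -> 0 <= Q -> S * S <= P * Q ->
  (S + a * b) * (S + a * b) <= (P + a * a) * (Q + b * b).
Proof.
  move=> hP hQ hS.
  have hu : 0 <= P * (b*b) by nra.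
  have hv : 0 <= Q * (a*a) by nra.
  have hw : (S*a*b)*(S*a*b) <= (P*(b*b)) * (Q*(a*a)).
  { have h0 : 0 <= a*a*(b*b) by nra.
    have := Rmult_le_compat_r _ _ _ h0 hS.
    replace ((S*a*b)*(S*a*b)) with (S*S*(a*a*(b*b))) by ring.
    replace ((P*(b*b)) * (Q*(a*a))) with (P*Q*(a*a*(b*b))) by ring. done. }
  have : 2 * (S*a*b) <= P*(b*b) + Q*(a*a).
  { set u := P*(b*b) in hu hw *; set v := Q*(a*a) in hv hw *; set w := S*a*b in hw *.
    destruct (Rle_or_lt (2*w) (u+v)) as [h|h]; first done.
    have h1 : (u+v)*(u+v) < (2*w)*(2*w) by apply Rmult_le_0_lt_compat; lra.
    have h2 := Rle_0_sqr (u-v). unfold Rsqr in h2. nra. }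
  nra.
Qed.

Lemma lsum_cs (s : seq T) f g :
  lsum s (fun x => f x * g x) * lsum s (fun x => f x * g x)
  <= lsum s (fun x => f x * f x) * lsum s (fun x => g x * g x).
Proof.
  rewrite /lsum; elim: s => [|x s IH] /=; first lra.
  have hP : 0 <= lsum s (fun x => f x * f x) by apply lsum_nonneg => y; nra.
  have hQ : 0 <= lsum s (fun x => g x * g x) by apply lsum_nonneg => y; nra.
  rewrite /lsum in hP hQ.
  have := aux_cs _ _ _ (f x) (g x) hP hQ IH. move=> h; nra.
Qed.
End L.

Section N.
Variable k : nat.
Implicit Types u v : 'I_k -> R.
Definition sq2 v := lsum (enum 'I_k) (fun i => v i ^ 2).
Lemma norm2E v : norm2 v = sqrt (sq2 v). Proof. reflexivity. Qed.
Lemma sq2_ge0 v : 0 <= sq2 v.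
Proof. apply lsum_nonneg => i; apply pow2_ge_0. Qed.
Lemma norm2_ge0 v : 0 <= norm2 v. Proof. apply sqrt_pos. Qed.
Lemma norm2_pow v : norm2 v ^ 2 = sq2 v.
Proof. rewrite norm2E /= Rmult_1_r sqrt_sqrt //; apply sq2_ge0. Qed.
Lemma norm2_ext u v : (forall i, u i = v i) -> norm2 u = norm2 v.
Proof. move=> H; rewrite !norm2E /sq2; f_equal; apply lsum_ext => i; rewrite H; reflexivity. Qed.
Lemma norm2_zero : norm2 (fun _ : 'I_k => 0) = 0.
Proof. rewrite norm2E /sq2 (lsum_ext _ _ (fun _ => 0)); first by rewrite lsum_zero sqrt_0.
  move=> i /=; ring. Qed.
Lemma norm2_scal c v : norm2 (fun i => c * v i) = Rabs c * norm2 v.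
Proof.
  rewrite !norm2E /sq2 (lsum_ext _ _ (fun i => (c*c) * v i ^ 2)); last by move=> i /=; ring.
  rewrite lsum_scal sqrt_mult_alt; last by nra.
  rewrite -/(Rsqr c) sqrt_Rsqr_abs; reflexivity.
Qed.
Lemma norm2_triangle u v : norm2 (fun i => u i + v i) <= norm2 u + norm2 v.
Proof.
  have hu := norm2_ge0 u; have hv := norm2_ge0 v; have hw := norm2_ge0 (fun i => u i + v i).
  have e : sq2 (fun i => u i + v i) = sq2 u + sq2 v + 2 * lsum (enum 'I_k) (fun i => u i * v i).
  { rewrite /sq2 -lsum_scal -!lsum_plus; apply lsum_ext => i /=; ring. }
  have cs := lsum_cs (enum 'I_k) u v.
  have e1 : lsum (enum 'I_k) (fun i => u i * u i) = norm2 u ^ 2.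
  { rewrite norm2_pow /sq2; apply lsum_ext => i /=; ring. }
  have e2 : lsum (enum 'I_k) (fun i => v i * v i) = norm2 v ^ 2.
  { rewrite norm2_pow /sq2; apply lsum_ext => i /=; ring. }
  rewrite e1 e2 in cs.
  set p := lsum (enum 'I_k) (fun i => u i * v i) in e cs.
  have hp : p <= norm2 u * norm2 v.
  { destruct (Rle_or_lt p (norm2 u * norm2 v)) as [h|h]; first done.
    have : (norm2 u * norm2 v) * (norm2 u * norm2 v) < p * p.
    { apply Rmult_le_0_lt_compat; nra. }
    simpl in cs. nra. }
  have hw2 := norm2_pow (fun i => u i + v i). rewrite e -!norm2_pow in hw2. simpl in hw2.
  destruct (Rle_or_lt (norm2 (fun i => u i + v i)) (norm2 u + norm2 v)) as [h|h]; first done.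
  have : (norm2 u + norm2 v) * (norm2 u + norm2 v) < norm2 (fun i => u i + v i) * norm2 (fun i => u i + v i).
  { apply Rmult_le_0_lt_compat; lra. }
  nra.
Qed.
End N.
Arguments norm2_ge0 {k}. Arguments norm2_pow {k}. Arguments sq2_ge0 {k}.

Lemma Rinf_spec (S : R -> Prop) : (exists y, S y) -> (forall y, S y -> 0 <= y) ->
  Defs.is_glb S (Rinf S).
Proof.
  move=> [y0 hy0] hpos. rewrite /Rinf. apply epsilon_spec.
  have hb : bound (fun y => S (- y)).
  { exists 0 => z hz. have := hpos _ hz. lra. }
  have he : exists z, S (- z) by exists (- y0); rewrite Ropp_involutive.
  case: (completeness _ hb he) => M [hub hl].
  exists (- M); split.
  - move=> y hy. have : - y <= M by apply hub; rewrite Ropp_involutive. lra.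
  - move=> w hw. have : M <= - w.
    { apply hl => z hz. have := hw _ hz. lra. }
    lra.
Qed.

Lemma matvec_list (m d : nat) (A : 'I_m -> 'I_d -> R) (a : 'I_d -> R) (del : R) (s : seq 'I_d) :
  (forall j, norm2 (fun i => A i j) <= del) ->
  norm2 (fun i => lsum s (fun j => A i j * a j)) <= del * lsum s (fun j => Rabs (a j)).
Proof.
  move=> hc; elim: s => [|j s IH].
  - rewrite (@norm2_ext _ _ (fun _ => 0)) ?norm2_zero /lsum /=; [lra| reflexivity].
  - rewrite (@norm2_ext _ _ (fun i => a j * A i j + lsum s (fun j => A i j * a j))); last first.
      move=> i; rewrite /lsum /=; ring.
    eapply Rle_trans; first by apply norm2_triangle.
    rewrite norm2_scal. have := hc j. have := Rabs_pos (a j). rewrite /lsum /= in IH *.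
    move=> h1 h2. have : Rabs (a j) * norm2 (fun i => A i j) <= Rabs (a j) * del.
    { apply Rmult_le_compat_l; lra. }
    lra.
Qed.

Lemma matvec_bound (m d : nat) (A : 'I_m -> 'I_d -> R) (a : 'I_d -> R) (del : R) :
  (forall j, norm2 (fun i => A i j) <= del) -> norm2 (matvec A a) <= del * norm1 a.
Proof. move=> hc; exact: (matvec_list _ _ _ a del (enum 'I_d) hc). Qed.

Lemma matvec_split (m d : nat) (D1 D2 : 'I_m -> 'I_d -> R) a i :
  matvec D2 a i = matvec D1 a i + matvec (matsub D2 D1) a i.
Proof. rewrite /matvec !osumE -lsum_plus; apply lsum_ext => j; rewrite /matsub; ring. Qed.

Lemma alg_core (X Rn W N1 del s : R) :
  0 < s -> 0 <= Rn -> Rn <= X -> 0 <= W -> W <= del * N1 -> 0 <= del -> 0 <= N1 ->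
  s * N1 <= 2 * X ->
  / 2 * ((Rn + W) * (Rn + W)) <=
  / 2 * (Rn * Rn) + (2 * del * (X * X) / s + 2 * (del * del) * (X * X) / (s * s)).
Proof.
  move=> hs hR hRX hW hWd hd hN hsN.
  have hN' : N1 <= 2 * X / s.
  { apply (Rmult_le_reg_l s); first done. field_simplify; lra. }
  have hW' : W <= del * (2 * X / s).
  { eapply Rle_trans; first exact hWd. apply Rmult_le_compat_l; lra. }
  set q := 2 * X / s in hN' hW'.
  have eq1 : 2 * del * (X * X) / s + 2 * (del * del) * (X * X) / (s * s)
           = X * (del * q) + / 2 * ((del * q) * (del * q)).
  { rewrite /q; field; lra. }
  rewrite eq1.
  have hX : 0 <= X by lra.
  have h1 : Rn * W <= X * (del * q) by apply Rmult_le_compat; lra.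
  have h2 : W * W <= (del * q) * (del * q) by apply Rmult_le_compat; lra.
  lra.
Qed.

Lemma sq_le (a b : R) : 0 <= a -> 0 <= b -> a * a <= b * b -> a <= b.
Proof.
  move=> ha hb h. destruct (Rle_or_lt a b) as [h'|h']; first done.
  have : b * b < a * a by apply Rmult_le_0_lt_compat; lra. lra.
Qed.

Lemma norm1_ge0 {d : nat} (a : 'I_d -> R) : 0 <= norm1 a.
Proof. apply lsum_nonneg => j; apply Rabs_pos. Qed.

Lemma val_step (m d : nat) (K : ('I_d -> R) -> Prop) (Dset : ('I_m -> 'I_d -> R) -> Prop)
  (kappa : R) (hk : 0 < kappa)
  (B2 : forall (a : 'I_d -> R) (D : 'I_m -> 'I_d -> R), K a -> Dset D ->
          kappa * pow (norm1 a) 2 <= pow (norm2 (matvec D a)) 2)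
  (x : 'I_m -> R) (D1 D2 : 'I_m -> 'I_d -> R) (del : R) (a : 'I_d -> R)
  (hK : K a) (h1 : Dset D1)
  (hcol : forall j, norm2 (fun i => D2 i j - D1 i j) <= del) (hd : 0 <= del)
  (hv : / 2 * pow (norm2 (fun i => x i - matvec D1 a i)) 2 <= / 2 * pow (norm2 x) 2) :
  / 2 * pow (norm2 (fun i => x i - matvec D2 a i)) 2 <=
  / 2 * pow (norm2 (fun i => x i - matvec D1 a i)) 2 +
  (2 * del * (norm2 x * norm2 x) / sqrt kappa
   + 2 * (del * del) * (norm2 x * norm2 x) / (sqrt kappa * sqrt kappa)).
Proof.
  set r := fun i => x i - matvec D1 a i.
  set w := matvec (matsub D2 D1) a.
  have hs : 0 < sqrt kappa by apply sqrt_lt_R0.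
  have hss : sqrt kappa * sqrt kappa = kappa by apply sqrt_sqrt; lra.
  have hX := norm2_ge0 x. have hR := norm2_ge0 r. have hW := norm2_ge0 w.
  have hN := norm1_ge0 a.
  have t1 : norm2 (fun i => x i - matvec D2 a i) <= norm2 r + norm2 w.
  { rewrite (@norm2_ext _ _ (fun i => r i + (-1) * w i)); last first.
      move=> i; rewrite /r /w (matvec_split _ _ D1); ring.
    eapply Rle_trans; first apply norm2_triangle.
    rewrite norm2_scal Rabs_Ropp Rabs_R1. lra. }
  have t2 : norm2 r <= norm2 x.
  { apply sq_le => //. move: hv; rewrite -/r /= !Rmult_1_r. lra. }
  have t3 : norm2 (matvec D1 a) <= 2 * norm2 x.
  { rewrite (@norm2_ext _ _ (fun i => x i + (-1) * r i)); last first.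
      move=> i; rewrite /r; ring.
    eapply Rle_trans; first apply norm2_triangle.
    rewrite norm2_scal Rabs_Ropp Rabs_R1. lra. }
  have t4 : sqrt kappa * norm1 a <= 2 * norm2 x.
  { apply sq_le; try nra.
    have hb := B2 _ _ hK h1. rewrite -hss /= !Rmult_1_r in hb.
    have hV := norm2_ge0 (matvec D1 a).
    have : norm2 (matvec D1 a) * norm2 (matvec D1 a) <= 2 * norm2 x * (2 * norm2 x)
      by apply Rmult_le_compat.
    have e : sqrt kappa * norm1 a * (sqrt kappa * norm1 a) = sqrt kappa * sqrt kappa * (norm1 a * norm1 a) by ring.
    rewrite e. lra. }
  have t5 : norm2 w <= del * norm1 a by apply matvec_bound.
  have t6 : / 2 * pow (norm2 (fun i => x i - matvec D2 a i)) 2 <=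
            / 2 * ((norm2 r + norm2 w) * (norm2 r + norm2 w)).
  { have := norm2_ge0 (fun i => x i - matvec D2 a i). simpl. nra. }
  eapply Rle_trans; first exact t6.
  have := alg_core _ _ _ _ _ _ hs hR t2 hW t5 hd hN t4. simpl. rewrite -/r. lra.
Qed.

Definition cst (kappa del X : R) :=
  2 * del * (X * X) / sqrt kappa + 2 * (del * del) * (X * X) / (sqrt kappa * sqrt kappa).

Lemma fx_step (m d : nat) (K : ('I_d -> R) -> Prop) (Dset : ('I_m -> 'I_d -> R) -> Prop)
  (kappa : R) (hk : 0 < kappa)
  (B2 : forall (a : 'I_d -> R) (D : 'I_m -> 'I_d -> R), K a -> Dset D ->
          kappa * pow (norm1 a) 2 <= pow (norm2 (matvec D a)) 2)
  (B3 : K (fun _ => 0))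
  (x : 'I_m -> R) (D1 D2 : 'I_m -> 'I_d -> R) (del : R) (h1 : Dset D1)
  (hcol : forall j, norm2 (fun i => D2 i j - D1 i j) <= del) (hd : 0 <= del) :
  fx K x D2 <= fx K x D1 + cst kappa del (norm2 x).
Proof.
  have spec : forall D : 'I_m -> 'I_d -> R, Defs.is_glb
     (fun v => exists a, K a /\ v = / 2 * pow (norm2 (fun i => x i - matvec D a i)) 2) (fx K x D).
  { move=> D. apply Rinf_spec.
    - by exists (/ 2 * pow (norm2 (fun i => x i - matvec D (fun _ => 0) i)) 2); exists (fun _ => 0).
    - move=> y [a [_ ->]]. apply Rmult_le_pos; first lra. apply pow2_ge_0. }
  have v0 : forall D : 'I_m -> 'I_d -> R, / 2 * pow (norm2 (fun i => x i - matvec D (fun _ => 0) i)) 2 = / 2 * pow (norm2 x) 2.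
  { move=> D. rewrite (@norm2_ext _ (fun i => x i - matvec D (fun _ => 0) i) x) //. move=> i.
    rewrite /matvec osumE (lsum_ext _ _ (fun _ => 0)) ?lsum_zero; first ring. move=> j; ring. }
  case: (spec D1) => lb1 gl1. case: (spec D2) => lb2 gl2.
  apply Rle_plus_epsilon => eps heps.
  have [a [hKa [hva hvb]]] : exists a, K a /\
      / 2 * pow (norm2 (fun i => x i - matvec D1 a i)) 2 <= fx K x D1 + eps /\
      / 2 * pow (norm2 (fun i => x i - matvec D1 a i)) 2 <= / 2 * pow (norm2 x) 2.
  { apply NNPP => hn.
    have : fx K x D1 + eps <= fx K x D1; last lra.
    apply gl1 => y [a [hKa ->]].
    destruct (Rle_or_lt (/ 2 * pow (norm2 (fun i => x i - matvec D1 a i)) 2) (fx K x D1 + eps)) as [h|h]; last lra.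
    destruct (Rle_or_lt (/ 2 * pow (norm2 (fun i => x i - matvec D1 a i)) 2) (/ 2 * pow (norm2 x) 2)) as [h'|h'].
    - exfalso; apply hn; exists a; tauto.
    - exfalso; apply hn; exists (fun _ => 0); split => //. rewrite v0. split; last lra.
      have := lb1 _ (ex_intro _ a (conj hKa erefl)). lra. }
  have hs := val_step _ _ _ _ _ hk B2 x D1 D2 del a hKa h1 hcol hd hvb.
  have := lb2 _ (ex_intro _ a (conj hKa erefl)). rewrite /cst. lra.
Qed.

Lemma norm12_list (m d : nat) (A : 'I_m -> 'I_d -> R) (s : seq 'I_d) j :
  j \in s -> norm2 (fun i => A i j) <=
  foldr (fun j acc => Rmax (norm2 (fun i => A i j)) acc) 0 s.
Proof.
  elim: s => [|x s IH] //=. rewrite in_cons => /orP [/eqP -> | h].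
  - apply Rmax_l.
  - eapply Rle_trans; [exact: IH | apply Rmax_r].
Qed.

Lemma norm12_col (m d : nat) (A : 'I_m -> 'I_d -> R) j : norm2 (fun i => A i j) <= norm12 A.
Proof. apply norm12_list. by rewrite mem_enum. Qed.

Lemma norm12_ge0 (m d : nat) (A : 'I_m -> 'I_d -> R) : 0 <= norm12 A.
Proof.
  rewrite /norm12; elim: (enum 'I_d) => [|x s IH] /=; first lra.
  eapply Rle_trans; [exact IH | apply Rmax_r].
Qed.

Lemma gbar_eq (kappa X : R) : 0 < kappa -> 0 <= X ->
  X * gbar kappa (pow X 2 / 2) = 2 * (X * X) / sqrt kappa.
Proof.
  move=> hk hX. rewrite /gbar.
  have -> : 2 * (X ^ 2 / 2) / kappa = (X * X) * / kappa by simpl; field; lra.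
  rewrite sqrt_mult_alt; last nra.
  rewrite sqrt_square // sqrt_inv. field. apply Rgt_not_eq, sqrt_lt_R0; lra.
Qed.

Lemma inv_INR_ge0 n : 0 <= / INR n.
Proof.
  case: n => [|n]; first by rewrite /= Rinv_0; lra.
  apply Rlt_le, Rinv_0_lt_compat, lt_0_INR. apply/ssrnat.leP. done.
Qed.

Theorem mainTheorem10 (m d n : nat) (kappa : R)
  (K : ('I_d -> R) -> Prop) (Dset : ('I_m -> 'I_d -> R) -> Prop)
  (hkappa : 0 < kappa)
  (B2 : forall (a : 'I_d -> R) (D : 'I_m -> 'I_d -> R), K a -> Dset D ->
          kappa * pow (norm1 a) 2 <= pow (norm2 (matvec D a)) 2)
  (B3 : K (fun _ => 0))
  (X : 'I_m -> 'I_n -> R) (D D' : 'I_m -> 'I_d -> R)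
  (hD : Dset D) (hD' : Dset D') (hne : D' <> D) :
  Rabs (FX K X D' - FX K X D) / norm12 (matsub D' D)
  <= LX kappa X * (1 + / sqrt kappa * norm12 (matsub D' D)).
Proof.
  set del := norm12 (matsub D' D).
  have hd : 0 <= del by apply norm12_ge0.
  have hs : 0 < sqrt kappa by apply sqrt_lt_R0.
  set G := fun i => norm2 (col X i) * gbar kappa (pow (norm2 (col X i)) 2 / 2).
  have hG : forall i, G i = 2 * (norm2 (col X i) * norm2 (col X i)) / sqrt kappa.
  { move=> i; rewrite /G gbar_eq //; apply norm2_ge0. }
  have hG0 : forall i, 0 <= G i.
  { move=> i; rewrite hG. apply Rmult_le_pos; last by apply Rlt_le, Rinv_0_lt_compat.
    have := norm2_ge0 (col X i). nra. }
  have hcol1 : forall j, norm2 (fun i => D' i j - D i j) <= del.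
  { move=> j; exact: (norm12_col _ _ (matsub D' D) j). }
  have hcol2 : forall j, norm2 (fun i => D i j - D' i j) <= del.
  { move=> j; rewrite (@norm2_ext _ _ (fun i => (-1) * (D' i j - D i j))); last by move=> i; ring.
    rewrite norm2_scal Rabs_Ropp Rabs_R1 Rmult_1_l; apply hcol1. }
  have hper : forall i, Rabs (fx K (col X i) D' - fx K (col X i) D) <= G i * (del * (1 + / sqrt kappa * del)).
  { move=> i.
    have e : G i * (del * (1 + / sqrt kappa * del)) = cst kappa del (norm2 (col X i)).
    { rewrite hG /cst. field. lra. }
    rewrite e. apply Rabs_le. split.
    - have := fx_step _ _ _ _ _ hkappa B2 B3 (col X i) D' D del hD' hcol2 hd. lra.
    - have := fx_step _ _ _ _ _ hkappa B2 B3 (col X i) D D' del hD hcol1 hd. lra. }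
  have hLX : LX kappa X = / INR n * lsum (enum 'I_n) G by reflexivity.
  have hLX0 : 0 <= LX kappa X.
  { rewrite hLX. apply Rmult_le_pos; first apply inv_INR_ge0. by apply lsum_nonneg. }
  have hmain : Rabs (FX K X D' - FX K X D) <= LX kappa X * (del * (1 + / sqrt kappa * del)).
  { rewrite /FX !osumE -Rmult_minus_distr_l -lsum_minus Rabs_mult.
    rewrite (Rabs_pos_eq _ (inv_INR_ge0 n)) hLX Rmult_assoc.
    apply Rmult_le_compat_l; first apply inv_INR_ge0.
    eapply Rle_trans; first apply lsum_abs.
    rewrite Rmult_comm -lsum_scal. apply lsum_le => i. rewrite Rmult_comm.
    apply hper. }
  destruct (Req_dec del 0) as [h0|h0].
  - rewrite h0 /Rdiv Rinv_0 Rmult_0_r. nra.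
  - have hdp : 0 < del by lra.
    apply (Rmult_le_reg_r del); first done.
    rewrite /Rdiv Rmult_assoc Rinv_l // Rmult_1_r.
    have -> : LX kappa X * (1 + / sqrt kappa * del) * del = LX kappa X * (del * (1 + / sqrt kappa * del)) by ring.
    exact hmain.
Qed.
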